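(* For $0<p<1$ let $f(k,p)=\frac{-1}{\log(1-p)}\frac{p^k}{k}$, $k\ge1$, be the logarithmic probability mass function. Let $X$ have pmf $f(\cdot,p)$ and $Y$ have pmf $f(\cdot,q)$ with $0<p,q<1$. Then $X\le_{st}Y$ if and only if $p\le q$, and $X\le_{wd}Y$ if and only if $p\le q$.
   Context: For a real random variable $X$, its Lévy concentration function is $Q_X(\varepsilon)=\sup_{x_0\in\mathbb{R}}\Pr\{X\in[x_0,x_0+\varepsilon]\}$, $\varepsilon>0$. For random variables $X,Y$, write $X\le_{wd}Y$ if $Q_X(\varepsilon)\ge Q_Y(\varepsilon)$ for all $\varepsilon>0$. $X\le_{st}Y$ denotes the usual stochastic order: $\Pr(X>t)\le\Pr(Y>t)$ for all $t$. *)

(* Defs.v *)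
From Stdlib Require Import Reals ClassicalEpsilon.
From Coquelicot Require Import Coquelicot.
Open Scope R_scope.

Definition logpmf (p : R) (k : nat) : R :=
  match k with
  | O => 0
  | S _ => (-1 / ln (1 - p)) * (p ^ k / INR k)
  end.

Definition prob (f : nat -> R) (A : R -> Prop) : R :=
  Series (fun k => if excluded_middle_informative (A (INR k)) then f k else 0).

Definition conc (f : nat -> R) (eps : R) : Rbar :=
  Lub_Rbar (fun r => exists x0 : R, r = prob f (fun x => x0 <= x <= x0 + eps)).

Definition wd_le (f g : nat -> R) : Prop :=
  forall eps : R, 0 < eps -> Rbar_le (conc g eps) (conc f eps).

Definition st_le (f g : nat -> R) : Prop :=
  forall t : R, prob f (fun x => t < x) <= prob g (fun x => t < x).

(* Main.v *)
Require Import Defs.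
From Stdlib Require Import Reals.
From Coquelicot Require Import Coquelicot.
Open Scope R_scope.
From Stdlib Require Import Reals Lra Lia ClassicalEpsilon.
From Coquelicot Require Import Coquelicot.
Open Scope R_scope.

Definition acoef (k : nat) : R := match k with O => 0 | S _ => / INR k end.

Lemma acoef_derive : forall n, PS_derive acoef n = 1.
Proof. intros n. unfold PS_derive, acoef. field. apply not_0_INR. lia. Qed.

Lemma CV_acoef : CV_radius acoef = 1.
Proof.
  rewrite <- CV_radius_derive.
  rewrite (CV_radius_ext _ (fun _ => 1)) by apply acoef_derive.
  replace (Finite 1) with (Finite (/1)) by (f_equal; field).
  apply CV_radius_finite_DAlembert; [intros; lra | lra |].
  eapply is_lim_seq_ext; [| apply is_lim_seq_const].
  intros n; simpl. unfold Rdiv; rewrite Rinv_1, Rmult_1_r, Rabs_R1; reflexivity.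
Qed.

Lemma PS_acoef : forall x, 0 <= x < 1 -> PSeries acoef x = - ln (1 - x).
Proof.
  intros x Hx.
  destruct (Req_dec x 0) as [->|Hx0].
  { rewrite PSeries_0. simpl. rewrite Rminus_0_r, ln_1. ring. }
  assert (H := eq_is_derive (fun t => PSeries acoef t + ln (1 - t)) 0 x).
  simpl in H. rewrite PSeries_0, Rminus_0_r, ln_1 in H. simpl in H.
  enough (0 + 0 = PSeries acoef x + ln (1 - x)) by lra.
  apply H; [| lra].
  intros t Ht.
  assert (Hr : Rbar_lt (Rabs t) (CV_radius acoef)).
  { rewrite CV_acoef. simpl. rewrite Rabs_pos_eq; lra. }
  assert (Heq : PSeries (PS_derive acoef) t + (- / (1 - t)) = 0).
  { unfold PSeries. rewrite (Series_ext _ (fun k => t ^ k)).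
      2:{ intros; rewrite acoef_derive; ring. }
      rewrite (is_series_unique _ _ (is_series_geom t ltac:(rewrite Rabs_pos_eq; lra))).
      field. lra. }
  assert (Hd : is_derive (fun t0 : R => PSeries acoef t0 + ln (1 - t0)) t
                 (PSeries (PS_derive acoef) t + (- / (1 - t)))).
  { apply (@is_derive_plus R_AbsRing).
    - apply is_derive_PSeries; exact Hr.
    - auto_derive. lra. field. lra. }
  rewrite Heq in Hd. exact Hd.
Qed.

Lemma ln1p_neg : forall p, 0 < p < 1 -> ln (1 - p) < 0.
Proof. intros p Hp. rewrite <- ln_1. apply ln_increasing; lra. Qed.

Definition cst p := -1 / ln (1 - p).

Lemma cst_pos : forall p, 0 < p < 1 -> 0 < cst p.
Proof. intros p Hp. unfold cst. pose proof (ln1p_neg p Hp).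
  replace (-1 / ln (1 - p)) with (/ - ln (1 - p)) by (field; lra).
  apply Rinv_0_lt_compat; lra. Qed.

Lemma logpmf_eq : forall p k, logpmf p k = cst p * (acoef k * p ^ k).
Proof. intros p [|k]; unfold logpmf, acoef, cst. ring. unfold Rdiv; ring. Qed.

Lemma logpmf_ex : forall p, 0 < p < 1 -> ex_series (logpmf p).
Proof. intros p Hp.
  apply (ex_series_ext (fun k => cst p * (acoef k * p ^ k))).
  { intros; now rewrite logpmf_eq. }
  apply (@ex_series_scal_l R_AbsRing). apply ex_series_Rabs, CV_disk_inside.
  rewrite CV_acoef. simpl. rewrite Rabs_pos_eq; lra. Qed.

Lemma logpmf_sum : forall p, 0 < p < 1 -> Series (logpmf p) = 1.
Proof. intros p Hp.
  rewrite (Series_ext _ (fun k => cst p * (acoef k * p ^ k))) by (intros; apply logpmf_eq).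
  rewrite Series_scal_l. change (Series _) with (PSeries acoef p).
  rewrite PS_acoef by lra. unfold cst. pose proof (ln1p_neg p Hp). field. lra. Qed.

Lemma acoef_nonneg : forall k, 0 <= acoef k.
Proof. intros [|k]; unfold acoef. lra. apply Rlt_le, Rinv_0_lt_compat, lt_0_INR; lia. Qed.

Lemma logpmf_nonneg : forall p k, 0 < p < 1 -> 0 <= logpmf p k.
Proof. intros p k Hp. rewrite logpmf_eq. apply Rmult_le_pos. apply Rlt_le, cst_pos; auto.
  apply Rmult_le_pos. apply acoef_nonneg. apply pow_le; lra. Qed.

Lemma Series_zero : Series (fun _ => 0) = 0.
Proof. rewrite (Series_ext _ (fun n => 0 * 0)) by (intros; ring).
  rewrite (Series_scal_l 0 (fun _ => 0)). ring. Qed.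

Lemma Series_nonneg' a : (forall n, 0 <= a n) -> ex_series a -> 0 <= Series a.
Proof. intros H1 H2. rewrite <- Series_zero. apply Series_le; auto. intros n; specialize (H1 n); lra. Qed.

Definition ind (f : nat -> R) (A : R -> Prop) k :=
  if excluded_middle_informative (A (INR k)) then f k else 0.

Lemma prob_ind f A : prob f A = Series (ind f A).
Proof. reflexivity. Qed.

Lemma ind_bounds f A k : 0 <= f k -> 0 <= ind f A k <= f k.
Proof. intros H. unfold ind. destruct excluded_middle_informative; lra. Qed.

Lemma ex_ind f A : (forall k, 0 <= f k) -> ex_series f -> ex_series (ind f A).
Proof. intros H1 H2. apply (@ex_series_le R_AbsRing R_CompleteNormedModule _ f); auto.
  intros n. change norm with Rabs. simpl. pose proof (ind_bounds f A n (H1 n)).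
  rewrite Rabs_pos_eq; lra. Qed.

Lemma prob_compl f A : (forall k, 0 <= f k) -> ex_series f ->
  prob f A + prob f (fun x => ~ A x) = Series f.
Proof. intros H1 H2. unfold prob. rewrite <- Series_plus; [| exact (ex_ind f A H1 H2) | exact (ex_ind f (fun x => ~ A x) H1 H2)].
  apply Series_ext. intros n. do 2 destruct excluded_middle_informative; tauto || lra. Qed.

Lemma st_fwd p q : 0 < p < 1 -> 0 < q < 1 -> p <= q -> st_le (logpmf p) (logpmf q).
Proof.
  intros Hp Hq Hpq t.
  set (rho := q / p). set (C := cst q / cst p).
  assert (Hrho : 1 <= rho) by (unfold rho; apply Rcomplements.Rle_div_r; lra).
  pose proof (cst_pos p Hp). pose proof (cst_pos q Hq).
  assert (HC : 0 < C) by (unfold C; apply Rdiv_lt_0_compat; lra).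
  assert (Hrel : forall k, logpmf q k = C * rho ^ k * logpmf p k).
  { intros k. rewrite !logpmf_eq.
    replace (q ^ k) with ((rho * p) ^ k) by (f_equal; unfold rho; field; lra).
    rewrite Rpow_mult_distr. unfold C. field. lra. }
  set (r := C * Rpower rho t).
  assert (Hr : 0 < r) by (unfold r, Rpower; pose proof (exp_pos (t * ln rho)); nra).
  pose proof (logpmf_ex p Hp) as Ep. pose proof (logpmf_ex q Hq) as Eq.
  pose proof (logpmf_nonneg p) as Np. pose proof (logpmf_nonneg q) as Nq.
  pose proof (prob_compl (logpmf p) (fun x => t < x) (fun k => Np k Hp) Ep) as Cp.
  pose proof (prob_compl (logpmf q) (fun x => t < x) (fun k => Nq k Hq) Eq) as Cq.
  rewrite logpmf_sum in Cp, Cq by auto.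
  assert (HA : prob (logpmf q) (fun x => ~ t < x) <= r * prob (logpmf p) (fun x => ~ t < x)).
  { unfold prob. rewrite <- Series_scal_l. apply Series_le.
    2:{ apply (@ex_series_scal_l R_AbsRing). exact (ex_ind _ (fun x => ~ t < x) (fun k => Np k Hp) Ep). }
    intros k. destruct excluded_middle_informative as [Hk|Hk].
    - split. apply Nq; auto. rewrite Hrel. unfold r.
      assert (rho ^ k <= Rpower rho t).
      { rewrite <- Rpower_pow by lra. apply Rle_Rpower; lra. }
      pose proof (Np k Hp). apply Rmult_le_compat_r; auto. apply Rmult_le_compat_l; lra.
    - rewrite Rmult_0_r; lra. }
  assert (HB : r * prob (logpmf p) (fun x => t < x) <= prob (logpmf q) (fun x => t < x)).
  { unfold prob. rewrite <- Series_scal_l. apply Series_le.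
    2:{ exact (ex_ind _ (fun x => t < x) (fun k => Nq k Hq) Eq). }
    intros k. destruct excluded_middle_informative as [Hk|Hk].
    - pose proof (Np k Hp). split. apply Rmult_le_pos; lra. rewrite Hrel. unfold r.
      assert (Rpower rho t <= rho ^ k).
      { rewrite <- Rpower_pow by lra. apply Rle_Rpower; lra. }
      apply Rmult_le_compat_r; auto. apply Rmult_le_compat_l; lra.
    - rewrite Rmult_0_r; lra. }
  assert (0 <= prob (logpmf p) (fun x => ~ t < x)).
  { unfold prob. apply Series_nonneg'.
    intros k; pose proof (ind_bounds (logpmf p) (fun x => ~ t < x) k (Np k Hp)); unfold ind in *; lra.
    exact (ex_ind _ (fun x => ~ t < x) (fun k => Np k Hp) Ep). }
  assert (0 <= prob (logpmf p) (fun x => t < x)).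
  { unfold prob. apply Series_nonneg'.
    intros k; pose proof (ind_bounds (logpmf p) (fun x => t < x) k (Np k Hp)); unfold ind in *; lra.
    exact (ex_ind _ (fun x => t < x) (fun k => Np k Hp) Ep). }
  destruct (Rle_lt_dec r 1).
  - assert ((1 - r) * prob (logpmf p) (fun x => ~ t < x) >= 0) by (apply Rle_ge, Rmult_le_pos; lra). lra.
  - assert ((r - 1) * prob (logpmf p) (fun x => t < x) >= 0) by (apply Rle_ge, Rmult_le_pos; lra). lra.
Qed.

Lemma pow_le1 x n : 0 <= x <= 1 -> x ^ n <= 1.
Proof. intros H; induction n; simpl. lra. pose proof (pow_le x n). nra. Qed.

Lemma logpmf_decr p s k : 0 < p < 1 -> (1 <= k)%nat -> logpmf p (s + k) <= logpmf p k.
Proof. intros Hp Hk. rewrite !logpmf_eq. pose proof (cst_pos p Hp).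
  apply Rmult_le_compat_l; [lra|].
  destruct k as [|k]; [lia|]. rewrite pow_add. replace (s + S k)%nat with (S (s + k)) by lia.
  unfold acoef.
  assert (/ INR (S (s + k)) <= / INR (S k)).
  { apply Rinv_le_contravar. apply lt_0_INR; lia. apply le_INR; lia. }
  pose proof (pow_le1 p s ltac:(lra)). pose proof (pow_le p s ltac:(lra)).
  pose proof (pow_le p (S k) ltac:(lra)).
  assert (0 <= / INR (S (s + k))) by (apply Rlt_le, Rinv_0_lt_compat, lt_0_INR; lia).
  assert (p ^ s * p ^ S k <= p ^ S k) by nra. nra. Qed.

Lemma exists_s x0 : exists s : nat, (s = 0%nat \/ INR s < x0) /\ x0 <= INR s + 1.
Proof.
  destruct (INR_unbounded x0) as [N HN].
  assert (forall N, x0 <= INR N -> exists s : nat, (s = 0%nat \/ INR s < x0) /\ x0 <= INR s + 1).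
  { clear N HN. intros N; induction N as [|N IH]; intros H.
    - exists 0%nat. simpl in *. split; [auto|lra].
    - destruct (Rle_lt_dec x0 (INR N)). apply IH; auto.
      exists N. rewrite S_INR in H. split; [auto|lra]. }
  apply (H N). lra.
Qed.

Lemma shift_bound p x0 eps : 0 < p < 1 ->
  prob (logpmf p) (fun x => x0 <= x <= x0 + eps) <= prob (logpmf p) (fun x => 1 <= x <= 1 + eps).
Proof.
  intros Hp. destruct (exists_s x0) as [s [Hs1 Hs2]].
  pose proof (logpmf_nonneg p) as Np. pose proof (logpmf_ex p Hp) as Ep.
  unfold prob. rewrite (Series_incr_n_aux _ s).
  2:{ intros k Hk. destruct excluded_middle_informative as [Hi|Hi]; auto.
      destruct Hs1 as [->|Hs1]; [lia|]. apply lt_INR in Hk. lra. }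
  apply Series_le.
  2:{ exact (ex_ind _ (fun x => 1 <= x <= 1 + eps) (fun k => Np k Hp) Ep). }
  intros k. destruct k as [|k].
  - rewrite Nat.add_0_r. split.
    + destruct excluded_middle_informative; [apply Np; auto|lra].
    + destruct excluded_middle_informative as [Hi|Hi].
      * destruct Hs1 as [->|Hs1]. simpl. destruct excluded_middle_informative; lra.
        lra.
      * destruct excluded_middle_informative; [apply Np; auto|lra].
  - destruct excluded_middle_informative as [Hi|Hi].
    + split. apply Np; auto.
      destruct excluded_middle_informative as [Hj|Hj].
      * apply logpmf_decr; auto; lia.
      * exfalso. apply Hj. rewrite plus_INR in Hi. rewrite S_INR in *.
        pose proof (pos_INR k). lra.
    + split. lra. destruct excluded_middle_informative; [apply Np; auto|lra].
Qed.

Lemma conc_eq p eps : 0 < p < 1 -> 0 <= eps ->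
  conc (logpmf p) eps = Finite (prob (logpmf p) (fun x => ~ 1 + eps < x)).
Proof.
  intros Hp He.
  assert (Heq : prob (logpmf p) (fun x => 1 <= x <= 1 + eps) = prob (logpmf p) (fun x => ~ 1 + eps < x)).
  { unfold prob. apply Series_ext. intros [|k].
    - simpl. do 2 destruct excluded_middle_informative; try lra; tauto.
    - rewrite S_INR. pose proof (pos_INR k).
      do 2 destruct excluded_middle_informative; try reflexivity; exfalso.
      + apply n; lra.
      + apply n; split; lra. }
  unfold conc. apply is_lub_Rbar_unique. split.
  - intros r [x0 ->]. simpl. rewrite <- Heq. apply shift_bound; auto.
  - intros b Hb. apply Hb. exists 1. symmetry; exact Heq.
Qed.

Lemma prob_low_sum p n t : 0 < p < 1 -> INR n <= t < INR n + 1 ->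
  prob (logpmf p) (fun x => ~ t < x) = sum_f_R0 (logpmf p) n.
Proof.
  intros Hp Ht. pose proof (logpmf_nonneg p) as Np. pose proof (logpmf_ex p Hp) as Ep.
  unfold prob. rewrite (Series_incr_n _ (S n)); [| lia | exact (ex_ind _ (fun x => ~ t < x) (fun k => Np k Hp) Ep)].
  simpl pred. rewrite (Series_ext _ (fun _ => 0)), Series_zero, Rplus_0_r.
  - apply sum_eq. intros i Hi. destruct excluded_middle_informative as [H|H]; auto.
    exfalso. apply H. apply le_INR in Hi. lra.
  - intros k. destruct excluded_middle_informative as [H|H]; auto.
    exfalso. apply H. rewrite plus_INR, S_INR. pose proof (pos_INR k). lra.
Qed.

Lemma prob_up p t : 0 < p < 1 ->
  prob (logpmf p) (fun x => t < x) = 1 - prob (logpmf p) (fun x => ~ t < x).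
Proof. intros Hp. pose proof (prob_compl (logpmf p) (fun x => t < x) (fun k => logpmf_nonneg p k Hp) (logpmf_ex p Hp)).
  rewrite logpmf_sum in H by auto. lra. Qed.

Lemma eq12 p q : 0 < p < 1 -> 0 < q < 1 ->
  logpmf p 1 = logpmf q 1 -> logpmf p 2 = logpmf q 2 -> p = q.
Proof. intros Hp Hq H1 H2. rewrite !logpmf_eq in H1, H2. unfold acoef in *.
  pose proof (cst_pos p Hp). pose proof (cst_pos q Hq).
  simpl in H1, H2. 
  assert (E1 : cst p * p = cst q * q) by (rewrite Rinv_1 in H1; lra).
  assert (E2 : cst p * p * p = cst q * q * q).
  { replace (1 + 1) with 2 in H2 by ring. 
    apply (Rmult_eq_reg_l (/2)); [| lra]. lra. }
  rewrite E1 in E2. assert (0 < cst q * q) by nra.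
  apply (Rmult_eq_reg_l (cst q * q)); lra.
Qed.

Lemma wd_fwd p q : 0 < p < 1 -> 0 < q < 1 -> p <= q -> wd_le (logpmf p) (logpmf q).
Proof. intros Hp Hq Hpq eps He. rewrite !conc_eq by (auto; lra). simpl.
  pose proof (st_fwd p q Hp Hq Hpq (1 + eps)).
  rewrite !prob_up in H by auto. lra. Qed.

Lemma low_eq_12 p q : 0 < p < 1 -> 0 < q < 1 ->
  (forall t, 1 < t -> prob (logpmf p) (fun x => ~ t < x) = prob (logpmf q) (fun x => ~ t < x)) -> p = q.
Proof. intros Hp Hq H.
  pose proof (H (INR 1 + /2) ltac:(simpl; lra)) as H1.
  pose proof (H (INR 2 + /2) ltac:(simpl; lra)) as H2.
  rewrite !(prob_low_sum _ 1) in H1 by (auto; lra).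
  rewrite !(prob_low_sum _ 2) in H2 by (auto; lra).
  simpl in H1, H2. apply eq12; auto; simpl in *; lra. Qed.

Theorem mainTheorem13 (p q : R) (hp : 0 < p < 1) (hq : 0 < q < 1) :
  (st_le (logpmf p) (logpmf q) <-> p <= q) /\
  (wd_le (logpmf p) (logpmf q) <-> p <= q).
Proof.
  split; split.
  - intros H. destruct (Rle_lt_dec p q) as [|Hlt]; auto. exfalso.
    pose proof (st_fwd q p hq hp ltac:(lra)) as H'.
    assert (p = q); [|lra]. apply low_eq_12; auto. intros t _.
    specialize (H t). specialize (H' t). rewrite !prob_up in H, H' by auto. lra.
  - apply st_fwd; auto.
  - intros H. destruct (Rle_lt_dec p q) as [|Hlt]; auto. exfalso.
    pose proof (wd_fwd q p hq hp ltac:(lra)) as H'.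
    assert (p = q); [|lra]. apply low_eq_12; auto. intros t Ht.
    specialize (H (t - 1) ltac:(lra)). specialize (H' (t - 1) ltac:(lra)).
    rewrite !conc_eq in H, H' by (auto; lra). simpl in H, H'.
    replace (1 + (t - 1)) with t in H, H' by ring. lra.
  - apply wd_fwd; auto.
Qed.
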